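(* Let $r\geq 2$ and $0\leq \alpha\leq 1-\frac{1}{r}$. Let $G$ be a graph on $n$ vertices with minimum degree $\delta=\delta(G)$, let $\mathbf{x}=(x_{1}, \dots, x_{n})$ be a non-negative unit eigenvector of $A_{\alpha}(G)$ corresponding to $\lambda_{\alpha}(G)$, and let $x=\min \{x_{1}, \dots, x_{n}\}$. If $x>0$, then $$\lambda_{\alpha}(G)\leq \alpha \delta+ (1-\alpha)\sqrt{\delta^2+\left(\frac{1}{nx^2}-1\right)n\delta}.$$
   Context: $A_\alpha(G)=\alpha D(G)+(1-\alpha)A(G)$, where $A(G)$ is the adjacency matrix and $D(G)$ the diagonal degree matrix; $\lambda_\alpha(G)$ is its largest eigenvalue. *)

(* Defs.v *)
From HB Require Import structures.
From mathcomp Require Import all_boot all_order all_algebra.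
Set Implicit Arguments. Unset Strict Implicit. Unset Printing Implicit Defensive.
Import Order.TTheory GRing.Theory Num.Theory.
Local Open Scope ring_scope.

(* A simple graph on vertex set 'I_n is a symmetric irreflexive relation e. *)

Definition deg (n : nat) (e : rel 'I_n) (i : 'I_n) : nat := #|[set j | e i j]|.

(* minimum degree delta(G) (for n > 0; the identity n is never attained
   since every degree is at most n - 1) *)
Definition mindeg (n : nat) (e : rel 'I_n) : nat := \big[minn/n]_(i < n) deg e i.

Definition adjmx (R : nzRingType) (n : nat) (e : rel 'I_n) : 'M[R]_n :=
  \matrix_(i, j) (e i j)%:R.

Definition degmx (R : nzRingType) (n : nat) (e : rel 'I_n) : 'M[R]_n :=
  \matrix_(i, j) (if i == j then (deg e i)%:R else 0).

Definition Aalpha (R : nzRingType) (n : nat) (e : rel 'I_n) (alpha : R) : 'M[R]_n :=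
  alpha *: degmx R e + (1 - alpha) *: adjmx R e.

Definition largest_eigenvalue (F : numFieldType) (n : nat) (M : 'M[F]_n) (l : F) : Prop :=
  eigenvalue M l /\ (forall m, eigenvalue M m -> m <= l).

(* Main.v *)
Require Import Defs.
From HB Require Import structures.
From mathcomp Require Import all_boot all_order all_algebra ring lra.
Import Order.TTheory GRing.Theory Num.Theory.
Local Open Scope ring_scope.

Lemma final (R: rcfType) (L xv xm s d Q n a : R) :
 0 <= a -> a <= 1 -> 0 < xm -> xm <= xv -> 0 <= s -> L * xv = (1-a) * s ->
 s^+2 <= d*Q -> Q <= 1 - (n-d)*xm^+2 -> 0 < n -> 0 <= d ->
 L <= (1-a) * Num.sqrt (d^+2 + ((n*xm^+2)^-1 - 1)*n*d).
Proof.
move=> a0 a1 xm0 xmv s0 eL sdQ Qb n0 d0.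
have Kx : (d^+2 + ((n*xm^+2)^-1 - 1)*n*d) * xm^+2 = d * (1 - (n-d)*xm^+2).
  field. by rewrite !lt0r_neq0 // exprn_gt0.
set K := _ + _ * n * d in Kx *.
have dQ0 : 0 <= d * Q by apply: le_trans sdQ; rewrite sqr_ge0.
have K0 : 0 <= K.
  have : 0 <= K * xm^+2 by rewrite Kx; apply: le_trans dQ0 _; rewrite ler_wpM2l.
  by rewrite pmulr_lge0 // exprn_gt0.
have [L0|L0] := lerP L 0.
  apply: le_trans L0 _; rewrite mulr_ge0 ?sqrtr_ge0 //; lra.
have sK := sqr_sqrtr K0.
have sK0 := sqrtr_ge0 K.
have h1 : L^+2 * xm^+2 <= ((1-a) * Num.sqrt K)^+2 * xm^+2.
  rewrite exprMn sK -[_ * K * _]mulrA Kx.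
  have : (L * xm)^+2 <= (L*xv)^+2.
    rewrite ler_pXn2r // ?nnegrE; try nra.
  rewrite eL => h; rewrite -exprMn; apply: le_trans h _; rewrite exprMn.
  rewrite ler_wpM2l ?sqr_ge0 //; apply: le_trans sdQ _; rewrite ler_wpM2l //.
have h2 : L^+2 <= ((1-a) * Num.sqrt K)^+2 by rewrite -(ler_pM2r (exprn_gt0 2 xm0)).
rewrite -(@ler_pXn2r _ 2) // ?nnegrE; try nra.
Qed.

Lemma cs (R : rcfType) n (a y : 'I_n -> R) : (forall j, 0 <= a j) ->
  (\sum_j a j * y j)^+2 <= (\sum_j a j) * (\sum_j a j * y j ^+2).
Proof.
move=> a0.
have E : \sum_j \sum_k a j * a k * (y j - y k)^+2 =
   \sum_j \sum_k (a k * (a j * y j^+2)) + \sum_j \sum_k (a j * (a k * y k^+2))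
   - 2 * (\sum_j \sum_k ((a j * y j) * (a k * y k))).
  rewrite mulr_sumr -big_split -sumrB /=; apply: eq_bigr => j _.
  rewrite mulr_sumr -big_split -sumrB /=; apply: eq_bigr => k _; ring.
have E1 : \sum_j \sum_k (a k * (a j * y j^+2)) = (\sum_j a j) * (\sum_j a j * y j ^+2).
  rewrite mulr_sumr; apply: eq_bigr => j _; by rewrite mulr_suml.
have E2 : \sum_j \sum_k (a j * (a k * y k^+2)) = (\sum_j a j) * (\sum_j a j * y j ^+2).
  rewrite mulr_suml; apply: eq_bigr => j _; by rewrite mulr_sumr.
have E3 : \sum_j \sum_k ((a j * y j) * (a k * y k)) = (\sum_j a j * y j)^+2.
  by rewrite expr2 big_distrlr.
rewrite E1 E2 E3 in E.
have : 0 <= \sum_j \sum_k a j * a k * (y j - y k)^+2.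
  by apply: sumr_ge0 => j _; apply: sumr_ge0 => k _; rewrite mulr_ge0 ?sqr_ge0 // mulr_ge0.
rewrite E; lra.
Qed.

Theorem lemma4p1 (R : rcfType) (r n : nat) (e : rel 'I_n) (alpha lam : R)
    (x : 'cV[R]_n) (xmin : R) :
  (2 <= r)%N ->
  symmetric e -> irreflexive e ->
  0 <= alpha -> alpha <= 1 - (r%:R)^-1 ->
  largest_eigenvalue (Aalpha e alpha) lam ->
  (forall i, 0 <= x i 0) ->
  \sum_(i < n) (x i 0) ^+ 2 = 1 ->
  Aalpha e alpha *m x = lam *: x ->
  (forall i, xmin <= x i 0) -> (exists i, x i 0 = xmin) ->
  0 < xmin ->
  lam <= alpha * (mindeg e)%:R
         + (1 - alpha) * Num.sqrt ((mindeg e)%:R ^+ 2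
              + ((n%:R * xmin ^+ 2)^-1 - 1) * n%:R * (mindeg e)%:R).
Proof.
move=> r2 _ _ a0 ar _ x0 sx1 Hev xmle [i0 _] xm0.
have a1 : alpha <= 1.
  have : 0 <= (r%:R : R)^-1 by rewrite invr_ge0 ler0n.
  lra.
have n0 : (0 < n)%N := leq_ltn_trans (leq0n _) (ltn_ord i0).
have n0R : 0 < (n%:R : R) by rewrite ltr0n.
have [v hv] : exists v, (deg e v <= mindeg e)%N.
  rewrite /mindeg; apply: (big_ind (fun m => exists v, (deg e v <= m)%N)).
  - exists i0; rewrite /deg; apply: leq_trans (max_card _) _; by rewrite card_ord.
  - move=> a b [v1 h1] [v2 h2]; case/orP: (leq_total a b) => hab;
      [exists v1; rewrite (minn_idPl hab) | exists v2; rewrite (minn_idPr hab)] => //.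
  - by move=> i _; exists i.
set d := deg e v in hv.
set a := fun j => ((e v j)%:R : R).
have a_ge0 : forall j, 0 <= a j by move=> j; rewrite ler0n.
have a_le1 : forall j, a j <= 1 by move=> j; rewrite /a; case: (e v j).
set s := \sum_j a j * x j 0.
set Q := \sum_j a j * x j 0 ^+ 2.
have dE : (d%:R : R) = \sum_j a j.
  rewrite /d /deg -sum1_card natr_sum big_mkcond /=; apply: eq_bigr => j _.
  by rewrite inE /a; case: (e v j).
have rowE : (Aalpha e alpha *m x) v 0 = alpha * d%:R * x v 0 + (1-alpha) * s.
  rewrite mxE (eq_bigr (fun j => alpha * ((v==j)%:R * d%:R * x j 0) + (1-alpha) * (a j * x j 0))).
    rewrite big_split /= -!mulr_sumr -[alpha * _ * _]mulrA; congr (_ * _ + _).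
    rewrite (bigD1 v) //= eqxx big1 ?addr0 ?mul1r ?mulrA //.
    by move=> j hj; rewrite eq_sym (negbTE hj) !mul0r.
  move=> j _; rewrite /Aalpha !mxE /a.
  by case: (v == j) => /=; ring.
have eL : (lam - alpha * d%:R) * x v 0 = (1 - alpha) * s.
  have := congr1 (fun M : 'M[R]_(n,1) => M v 0) Hev; rewrite /= rowE mxE => h.
  rewrite mulrBl -h; ring.
have s0 : 0 <= s by apply: sumr_ge0 => j _; rewrite mulr_ge0.
have sdQ : s^+2 <= d%:R * Q by rewrite dE; apply: cs.
have xsq : forall j, xmin^+2 <= x j 0 ^+2.
  move=> j; have := xmle j; rewrite !expr2; nra.
have Qb : Q <= 1 - (n%:R - d%:R) * xmin^+2.
  have : \sum_j (1 - a j) * xmin^+2 <= \sum_j (1 - a j) * x j 0 ^+2.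
    apply: ler_sum => j _; rewrite ler_wpM2l // subr_ge0 //.
  rewrite -mulr_suml sumrB sumr_const card_ord -dE.
  under eq_bigr => j _ do rewrite mulrBl mul1r.
  rewrite sumrB sx1 -/Q; lra.
have nx1 : n%:R * xmin^+2 <= 1.
  have : \sum_(j < n) xmin^+2 <= \sum_j x j 0 ^+2 by apply: ler_sum.
  by rewrite sx1 sumr_const cardE size_enum_ord mulr_natl.
have d0 : 0 <= (d%:R : R) by rewrite ler0n.
have H := @final R _ _ _ _ _ _ _ _ a0 a1 xm0 (xmle v) s0 eL sdQ Qb n0R d0.
have hvR : (d%:R : R) <= (mindeg e)%:R by rewrite ler_nat.
have c0 : 0 <= ((n%:R * xmin ^+ 2)^-1 - 1) * n%:R.
  rewrite mulr_ge0 ?ler0n // subr_ge0 invf_ge1 // ?mulr_gt0 // ?exprn_gt0.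
have : Num.sqrt (d%:R ^+ 2 + ((n%:R * xmin ^+ 2)^-1 - 1) * n%:R * d%:R) <=
       Num.sqrt ((mindeg e)%:R ^+ 2 + ((n%:R * xmin ^+ 2)^-1 - 1) * n%:R * (mindeg e)%:R).
  apply: ler_wsqrtr; apply: lerD.
    by rewrite (@ler_pXn2r _ 2) // ?nnegrE ?ler0n.
  exact: ler_wpM2l.
have : alpha * d%:R <= alpha * (mindeg e)%:R by apply: ler_wpM2l.
move: H; set S1 := Num.sqrt _; set S2 := Num.sqrt _ => H h1 h2.
have : (1 - alpha) * S1 <= (1 - alpha) * S2 by apply: ler_wpM2l; rewrite // subr_ge0.
lra.
Qed.
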